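(* For every integer $n>0$ there exists an open bounded convex set $P\subset\mathbb R^n$ such that $$\sup_\phi\frac{\int_P|\phi|\,d\mu}{-\mu(P)\inf_P\phi}=2,$$ where the supremum is over all convex functions $\phi:P\to\mathbb R$ with $\phi\in L^1(P)$, $\int_P\phi\,d\mu=0$ and $\phi\not\equiv0$.
   Context: $\mu$ denotes Lebesgue measure on $\mathbb R^n$. *)

(* Defs.v *)
From HB Require Import structures.
From mathcomp Require Import all_boot all_order all_algebra.
From mathcomp Require Import all_classical all_reals all_analysis.
Set Implicit Arguments. Unset Strict Implicit. Unset Printing Implicit Defensive.
Import Order.TTheory GRing.Theory Num.Theory.
Import numFieldNormedType.Exports.
Local Open Scope classical_set_scope.
Local Open Scope ring_scope.

Section LebesgueRn.
Context (R : realType).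

Definition mR : measurableType _ := measurableTypeR R.
Definition dR := ltac:(let t := type of mR in match t with measurableType ?d => exact d end).

Fixpoint Rn_disp (n : nat) : measure_display :=
  match n with
  | 0 => dR
  | k.+1 => (Rn_disp k, dR).-prod%mdisp
  end.

Fixpoint Rn (n : nat) : measurableType (Rn_disp n) :=
  match n return measurableType (Rn_disp n) with
  | 0 => mR
  | k.+1 => ((Rn k * mR)%type : measurableType _)
  end.

Fixpoint lebRn (n : nat) : {measure set (Rn n) -> \bar R} :=
  match n return {measure set (Rn n) -> \bar R} with
  | 0 => (@lebesgue_measure R : {measure set mR -> \bar R})
  | k.+1 => ((lebRn k \x (@lebesgue_measure R))%E : {measure set _ -> \bar R})
  end.

Fixpoint coordRn (n : nat) : Rn n -> nat -> R :=
  match n return Rn n -> nat -> R with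
  | 0 => fun x _ => x
  | k.+1 => fun p i => if i == k.+1 then p.2 else @coordRn k p.1 i
  end.

Definition toRow (n : nat) (x : Rn n) : 'rV[R]_n.+1 :=
  \row_(i < n.+1) coordRn x i.
End LebesgueRn.

Section RowMeasure.
Context (R : realType) (n : nat).
Local Open Scope ereal_scope.

Definition lebRow (A : set 'rV[R]_n.+1) : \bar R :=
  lebRn R n (@toRow R n @^-1` A).

Definition integrableRow (D : set 'rV[R]_n.+1) (f : 'rV[R]_n.+1 -> R) : Prop :=
  (lebRn R n).-integrable (@toRow R n @^-1` D) (EFin \o f \o @toRow R n).

Definition integralRow (D : set 'rV[R]_n.+1) (f : 'rV[R]_n.+1 -> R) : \bar R :=
  \int[lebRn R n]_(x in @toRow R n @^-1` D) (f (toRow x))%:E.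
End RowMeasure.

(* Main.v *)
Require Import Defs.
From HB Require Import structures.
From mathcomp Require Import all_boot all_order all_algebra.
From mathcomp Require Import all_classical all_reals all_analysis.
From mathcomp Require Import ring lra measurable_realfun unstable.
Import Order.TTheory GRing.Theory Num.Theory.
Import numFieldNormedType.Exports.
Local Open Scope classical_set_scope.
Local Open Scope ring_scope.
Set Warnings "-notation-overridden,-ambiguous-paths,-notation-incompatible-prefix".
Section Boxes.
Context (R : realType).

Fixpoint box (k : nat) : set (Rn R k) :=
  match k return set (Rn R k) with
  | 0 => (`]-1, 1[%classic : set R)
  | k.+1 => (box k `*` (`]-1, 1[%classic : set R))
  end.

Lemma box_coord k (x : Rn R k) :
  box k x <-> (forall j, (j <= k)%N -> `|coordRn x j| < 1).
Proof.
elim: k x => [|k IH] x.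
  rewrite /= in_itv /=; split.
    by move=> /andP[a b] j _; rewrite ltr_norml a b.
  by move=> /(_ 0%N (leqnn _)); rewrite ltr_norml.
case: x => x1 x2; rewrite /= in_itv /=; split.
  move=> [/IH H /andP[a b]] j jk.
  case: eqP => [_|/eqP jne]; first by rewrite ltr_norml a b.
  by apply: H; rewrite -ltnS ltn_neqAle jne jk.
move=> H; split.
  apply/IH => j jk.
  have := H j (leqW jk).
  by have -> : (j == k.+1) = false by apply/negbTE; rewrite neq_ltn ltnS jk.
by have := H k.+1 (leqnn _); rewrite eqxx ltr_norml.
Qed.
Lemma measurable_box k : measurable (box k).
Proof.
elim: k => [|k IH] /=; first exact: measurable_itv.
apply: measurableX => //; exact: measurable_itv.
Qed.

Definition lastc k (x : Rn R k) : R := coordRn x k.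

Lemma measurable_lastc k : measurable_fun setT (@lastc k).
Proof.
case: k => [|k] /=; rewrite /lastc /=.
  exact: measurable_id.
under eq_fun do rewrite eqxx.
exact: measurable_snd.
Qed.

Local Open Scope ereal_scope.
Lemma leb_itv (a b : R) : (a <= b)%R ->
  (@lebesgue_measure R) (`]a, b[%classic) = (b - a)%:E.
Proof.
move=> ab; have := lebesgue_measure_itv (`]a, b[%R); rewrite /= lte_fin.
case: ifPn => [_ ->|]; first by rewrite -EFinD.
rewrite -leNgt => ba ->; have -> : b = a by apply/le_anti; rewrite ab ba.
by rewrite subrr.
Qed.

Lemma lebRn_box k : lebRn R k (box k) = (2 ^+ k.+1)%:E.
Proof.
elim: k => [|k IH] /=.
  by rewrite leb_itv ?opprK.
rewrite product_measure1E; [|exact: measurable_box|exact: measurable_itv].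
rewrite IH [X in _ * X = _](_ : _ = (1 - -1)%:E); last exact: leb_itv.
rewrite -EFinM; congr (_%:E); rewrite [in RHS]exprS; ring.
Qed.

Lemma lebRn_slab k (I : set R) : measurable I -> I `<=` `](-1)%R, 1%R[%classic ->
  lebRn R k (box k `&` (@lastc k) @^-1` I) = (2 ^+ k)%:E * lebesgue_measure I.
Proof.
move=> mI sI; case: k => [|k] /=.
  rewrite expr0 mul1e /lastc /=; congr (lebesgue_measure _).
  by apply/seteqP; split => [x [] //|x Ix]; split => //; exact: sI.
have -> : box k.+1 `&` (@lastc k.+1) @^-1` I = box k `*` I.
  apply/seteqP; split => [[x1 x2]|[x1 x2]] /=; rewrite /lastc /= eqxx.
    by move=> [[]].
  by move=> [b i]; split => //; split => //; exact: sI.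
rewrite product_measure1E//; last exact: measurable_box.
by rewrite lebRn_box.
Qed.
End Boxes.
Section Row.
Context (R : realType) (m : nat).
Lemma ballP (v : 'rV[R]_m.+1) :
  ball (0 : 'rV[R]_m.+1) 1 v <-> forall j, `|v ord0 j| < 1.
Proof.
split.
  move=> [_ H] j; have := H ord0 j; rewrite /ball /= mxE sub0r normrN //.
move=> H; split => // i j; rewrite /ball /= mxE sub0r normrN.
by rewrite (ord1 i).
Qed.
End Row.
Section Generic.
Local Open Scope ereal_scope.
Context d (T : measurableType d) (R : realType) (mu : {measure set T -> \bar R}).
Context (D : set T) (mD : measurable D) (Dfin : mu D < +oo).

Lemma bnd_integrable (f : T -> R) (M : R) : measurable_fun D f ->
  (forall x, D x -> (`|f x| <= M)%R) -> mu.-integrable D (EFin \o f).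
Proof.
move=> mf fM.
apply: (@le_integrable _ _ _ mu D mD _ (EFin \o cst M)).
- exact/measurable_EFinP.
- move=> x Dx /=; rewrite lee_fin; apply: (le_trans (fM x Dx)).
  exact: ler_norm.
apply/integrableP; split; first exact/measurable_EFinP/measurable_cst.
rewrite (eq_integral (fun _ => (`|M|)%:E)); last by move=> x _.
rewrite integral_cst// lte_mul_pinfty//.
Qed.

Lemma fin_muD : mu D \is a fin_num.
Proof. by rewrite ge0_fin_numE. Qed.

Lemma upper_bound (f : T -> R) (c : R) : mu.-integrable D (EFin \o f) ->
  \int[mu]_(x in D) (f x)%:E = 0 -> (c <= 0)%R ->
  (forall x, D x -> c <= f x)%R ->
  (fine (\int[mu]_(x in D) (`|f x|)%:E) <= 2 * (fine (mu D) * - c))%R.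
Proof.
move=> fi f0 c0 cf.
have mf : measurable_fun D f by apply/measurable_EFinP; exact: measurable_int fi.
have ci : mu.-integrable D (EFin \o cst (- (2 * c))%R).
  apply: (@bnd_integrable _ `|2 * c|%R) => [|x _ /=]; last by rewrite normrN.
  exact: measurable_cst.
have ai : mu.-integrable D (fun x => (`|f x|)%:E).
  have := integrable_abse fi; apply: eq_integrable => // x _ /=.
have gi : mu.-integrable D (fun x => (f x)%:E + (- (2 * c))%:E).
  exact: (integrableD mD fi ci).
have H : \int[mu]_(x in D) (`|f x|)%:E <= (- (2 * c))%:E * mu D.
  have := le_integral mD ai gi; rewrite integralD// f0 add0e integral_cst//.
  apply => x /[!inE] Dx; rewrite -EFinD lee_fin.
  have := cf x Dx; case: (lerP 0 (f x)) => h1 h2.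
    by rewrite ger0_norm//; lra.
  by rewrite ltr0_norm//; lra.
rewrite -(fineK fin_muD) -EFinM in H.
have := fine_le (integrable_fin_num mD ai) _ H.
rewrite /= => /(_ isT) h; apply: (le_trans h); lra.
Qed.

Lemma lower_indic (g : T -> R) (B : set T) (dl : R) : measurable B -> B `<=` D ->
  mu.-integrable D (EFin \o g) ->
  (forall x, D x -> dl * \1_B x <= g x)%R ->
  (dl * fine (mu B))%:E <= \int[mu]_(x in D) (g x)%:E.
Proof.
move=> mB BD gi H.
have ii : mu.-integrable D (EFin \o (\1_B : T -> R)).
  apply: (@bnd_integrable _ 1%R); first exact: measurable_indic.
  by move=> x _; rewrite indicE; case: (_ \in _); rewrite ?normr1 ?normr0.
have hi : mu.-integrable D (fun x => dl%:E * (\1_B x)%:E).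
  exact: integrableZl.
have := le_integral mD hi gi.
rewrite integralZl// integral_indic// setIidl// EFinM fineK; last first.
  rewrite ge0_fin_numE// (le_lt_trans _ Dfin)// le_measure// inE//.
apply => x /[!inE] Dx; rewrite -EFinM lee_fin; exact: H.
Qed.
End Generic.

Section Main.
Context (R : realType) (m : nat).
Local Notation V := 'rV[R]_m.+1.
Local Notation P := (ball (0 : V) 1).
Local Open Scope convex_scope.

Lemma toRowE (x : Rn R m) (j : 'I_m.+1) : @toRow R m x ord0 j = coordRn x j.
Proof. by rewrite mxE. Qed.

Lemma toRow_last (x : Rn R m) : @toRow R m x ord0 ord_max = @lastc R m x.
Proof. by rewrite mxE. Qed.

Lemma preP : @toRow R m @^-1` P = box R m.
Proof.
apply/seteqP; split => x /=.
  move=> /ballP H; apply/box_coord => j jm.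
  by have := H (@Ordinal m.+1 j jm); rewrite toRowE.
move=> /box_coord H; apply/ballP => j; rewrite toRowE; apply: H.
by rewrite -ltnS.
Qed.

Lemma lebRowP : lebRow P = (2 ^+ m.+1)%:E.
Proof. by rewrite /lebRow preP lebRn_box. Qed.

Lemma P_convex : @convex_set R V P.
Proof.
apply/convex_setW => z y; rewrite !inE -!ball_normE /= => zx yx l l0 l1.
rewrite inE/=.
rewrite [X in `|X|](_ : _ = (0 - z : convex_lmodType V) <| l |>
                            (0 - y : convex_lmodType V)); last first.
  by rewrite opprD -[in LHS](convmm l (0 : convex_lmodType V)) addrACA -scalerBr -scalerBr.
rewrite (le_lt_trans (ler_normD _ _))// !normrZ.
rewrite (@ger0_norm _ l%:num)// (@ger0_norm _ l%:num.~) ?onem_ge0//.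
rewrite /onem; nra.
Qed.

Lemma P_bounded : bounded_set P.
Proof.
rewrite /bounded_near; exists 1; split => // M M1 x Px /=.
move: Px; rewrite -ball_normE /= sub0r normrN => /ltW/le_trans; apply.
exact: ltW.
Qed.

Lemma ratio_le2 (N den : R) : 0 <= N -> (0 < den -> N <= 2 * den) -> N / den <= 2.
Proof.
move=> N0 H; case: (ltgtP den 0) => [d0|d0|->]; last by rewrite invr0 mulr0.
  by apply: (le_trans (y := 0)) => //; rewrite mulr_ge0_le0// invr_le0 ltW.
by rewrite ler_pdivrMr//; exact: H.
Qed.

Definition theset := [set ((fine (integralRow P (fun x => `|phi x|)))
               / (- (fine (lebRow P) * inf (phi @` P))))%:E
        | phi in [set phi : 'rV[R]_m.+1 -> R |
            [/\ @convex_function R 'rV[R]_m.+1 P phi,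
                integrableRow P phi,
                integralRow P phi = 0%E &
                exists2 x, P x & phi x != 0]]].

Lemma mbox : measurable (box R m). Proof. exact: measurable_box. Qed.
Lemma fbox : (lebRn R m (box R m) < +oo)%E. Proof. by rewrite lebRn_box ltry. Qed.
#[local] Hint Resolve mbox : core.

Lemma intcst (r : R) :
  (\int[lebRn R m]_(x in box R m) r%:E = (r * 2 ^+ m.+1)%:E)%E.
Proof. by have := integral_cst (lebRn R m) mbox r%:E; rewrite lebRn_box -EFinM. Qed.

Lemma theset_ub : ubound theset 2%:E.
Proof.
move=> _ [phi [_ pint p0 _] <-]; rewrite lee_fin lebRowP /=.
apply: ratio_le2.
  apply: fine_ge0; apply: integral_ge0 => x _; rewrite lee_fin; exact: normr_ge0.
move=> den0.
have inf0 : inf (phi @` P) < 0.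
  rewrite ltNge; apply/negP => h; move: den0; rewrite oppr_gt0 ltNge.
  by rewrite mulr_ge0// exprn_ge0.
have hinf : has_inf (phi @` P).
  split; first by exists (phi 0), 0 => //; exact: ballxx.
  apply: contrapT => nl; move: inf0; rewrite inf_out ?ltxx// => -[].
  by move=> _ /nl.
have cf : forall x, box R m x -> inf (phi @` P) <= phi (@toRow R m x).
  move=> x bx; apply: (ge_inf hinf.2); exists (@toRow R m x) => //.
  by rewrite -preP in bx.
move: pint p0; rewrite /integrableRow /integralRow preP => pint p0.
have := @upper_bound _ _ _ _ _ mbox fbox _ _ pint p0 (ltW inf0) cf.
by rewrite lebRn_box /= mulrN.
Qed.

Lemma conv_entry (x y : convex_lmodType V) (t : {i01 R}) j :
  (x <| t |> y : V) ord0 j = t%:num * (x : V) ord0 j + (t%:num).~ * (y : V) ord0 j.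
Proof. by rewrite /conv /= !mxE. Qed.

Lemma convex_psi (a al : R) :
  @convex_function R V P (fun v => Num.max 0 (v ord0 ord_max - a) - al).
Proof.
move=> t x y _ _ /=; rewrite conv_entry convRE /onem.
set u := (x : V) ord0 ord_max; set w := (y : V) ord0 ord_max.
have t0 : 0 <= t%:num by [].
have t1 : t%:num <= 1 by exact: le1.
have h1 : 0 <= Num.max 0 (u - a) by rewrite le_max lexx.
have h2 : u - a <= Num.max 0 (u - a) by rewrite le_max lexx orbT.
have h3 : 0 <= Num.max 0 (w - a) by rewrite le_max lexx.
have h4 : w - a <= Num.max 0 (w - a) by rewrite le_max lexx orbT.
set M1 := Num.max 0 (u - a) in h1 h2 *; set M2 := Num.max 0 (w - a) in h3 h4 *.
have -> : t%:num * (M1 - al) + (1 - t%:num) * (M2 - al) =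
  (t%:num * M1 + (1 - t%:num) * M2) - al by ring.
rewrite lerD2r ge_max; apply/andP; split; nra.
Qed.

Lemma box_lastc (x : Rn R m) : box R m x -> `|@lastc R m x| < 1.
Proof. by move=> /box_coord; apply. Qed.

Lemma theset_approx (e : R) : 0 < e -> exists2 y, theset y & ((2 - e)%:E <= y)%E.
Proof.
move=> e0.
set e' := Num.min e 1.
have e'0 : 0 < e' by rewrite lt_min e0 ltr01.
have e'1 : e' <= 1 by rewrite ge_min lexx orbT.
have e'e : e' <= e by rewrite ge_min lexx.
set a := 1 - e' / 2.
have a0 : 0 < a by rewrite /a; lra.
have a1 : a < 1 by rewrite /a; lra.
pose g (x : Rn R m) := Num.max 0 (@lastc R m x - a).
have mg : measurable_fun setT g.
  apply: measurable_maxr; first exact: measurable_cst.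
  apply: measurable_funB; [exact: measurable_lastc|exact: measurable_cst].
have gi : (lebRn R m).-integrable (box R m) (EFin \o g).
  apply: (@bnd_integrable _ _ _ _ _ mbox fbox _ 2).
    exact: measurable_funS mg.
  move=> x /box_lastc; rewrite /g ltr_norml => /andP[h1 h2].
  rewrite ger0_norm ?le_max ?lexx// ge_max; apply/andP; split; lra.
set I := (\int[lebRn R m]_(x in box R m) (g x)%:E)%E.
have Ifin : I \is a fin_num := integrable_fin_num mbox gi.
set b := (1 + a) / 2.
have Ipos : 0 < fine I.
  have mB : measurable (box R m `&` (@lastc R m) @^-1` `]b, 1[%classic).
    apply: measurableI; first exact: measurable_box.
    rewrite -[X in measurable X]setTI; apply: (@measurable_lastc R m measurableT).
    exact: measurable_itv.
  have := @lower_indic _ _ _ _ _ mbox fbox g _ (b - a) mB (@subIsetl _ _ _) gi.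
  rewrite lebRn_slab; last 2 first.
  - exact: measurable_itv.
  - move=> r /=; rewrite !in_itv /= => /andP[h1 h2]; apply/andP; split => //.
    rewrite /b in h1; lra.
  rewrite [X in (_ * fine (_ * X))%:E](_ : _ = (1 - b)%:E); last first.
    by apply: leb_itv; rewrite /b; lra.
  rewrite -EFinM /= -/I -(fineK Ifin) lee_fin => H.
  apply: (lt_le_trans _ (H _)).
    by apply: mulr_gt0; [rewrite /b; lra|apply: mulr_gt0; [exact: exprn_gt0|rewrite /b; lra]].
  move=> x bx; rewrite indicE; case: (boolP (x \in _)) => [|_].
    rewrite inE => -[_] /=; rewrite in_itv /= => /andP[h1 _].
    by rewrite mulr1 /g le_max; apply/orP; right; lra.
  by rewrite mulr0 /g le_max lexx.
set al := fine I / 2 ^+ m.+1.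
have al0 : 0 < al by apply: divr_gt0 => //; exact: exprn_gt0.
pose phi (v : V) := Num.max 0 (v ord0 ord_max - a) - al.
have phiE x : phi (@toRow R m x) = g x - al by rewrite /phi toRow_last.
pose f x := g x - al.
have mf : measurable_fun (box R m) f.
  apply: measurable_funB; [exact: measurable_funS mg|exact: measurable_cst].
have fi : (lebRn R m).-integrable (box R m) (EFin \o f).
  apply: (@bnd_integrable _ _ _ _ _ mbox fbox _ (2 + al)) => // x /box_lastc.
  rewrite /f /g ltr_norml => /andP[h1 h2].
  have hm : 0 <= Num.max 0 (lastc R m x - a) by rewrite le_max lexx.
  have hM : Num.max 0 (lastc R m x - a) <= 2 by rewrite ge_max; apply/andP; split; lra.
  rewrite ler_norml; apply/andP; split; lra.
have fint : (\int[lebRn R m]_(x in box R m) (f x)%:E = 0)%E.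
  rewrite /f; under eq_integral do rewrite EFinB.
  rewrite integralB//; last first.
    apply/integrableP; split; first exact: measurable_cst.
    by rewrite intcst ltry.
  rewrite -/I intcst -(fineK Ifin) -EFinB /al.
  by rewrite divfK ?subrr// expf_neq0.
have phiinf : inf (phi @` P) = - al.
  have lb : lbound (phi @` P) (- al).
    move=> _ [v _ <-]; rewrite /phi.
    have h : 0 <= Num.max 0 (v ord0 ord_max - a) by rewrite le_max lexx.
    lra.
  have ph0 : phi 0 = - al by rewrite /phi mxE sub0r max_l ?add0r// oppr_le0 ltW.
  apply/le_anti/andP; split.
    rewrite -ph0; apply: ge_inf; first by exists (- al).
    by exists 0 => //; exact: ballxx.
  by apply: lb_le_inf => //; exists (phi 0), 0 => //; exact: ballxx.
have ph0 : phi 0 = - al by rewrite /phi mxE sub0r max_l ?add0r// oppr_le0 ltW.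
have afi : (lebRn R m).-integrable (box R m) (fun x => (`|f x|)%:E).
  have := integrable_abse fi; apply: eq_integrable => // x _ /=.
have gi' : (lebRn R m).-integrable (box R m) (EFin \o (fun x => `|f x| - f x)).
  have := integrableB mbox afi fi; apply: eq_integrable => // x _ /=.
have mA : measurable (box R m `&` (@lastc R m) @^-1` `](-1)%R, a[%classic).
  apply: measurableI; first exact: measurable_box.
  rewrite -[X in measurable X]setTI; apply: (@measurable_lastc R m measurableT).
  exact: measurable_itv.
have := @lower_indic _ _ _ _ _ mbox fbox _ _ (2 * al) mA (@subIsetl _ _ _) gi'.
rewrite lebRn_slab; last 2 first.
- exact: measurable_itv.
- move=> r /=; rewrite !in_itv /= => /andP[h1 h2]; apply/andP; split => //.
  lra.
rewrite [X in (_ * fine (_ * X))%:E](_ : _ = (a - -1)%:E); last first.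
  by apply: leb_itv; lra.
rewrite -EFinM /=.
have -> : (\int[lebRn R m]_(x in box R m) (`|f x| - f x)%:E =
    \int[lebRn R m]_(x in box R m) (`|f x|)%:E)%E.
  under eq_integral do rewrite EFinB.
  by rewrite integralB// fint sube0.
move=> H.
have {}H : 2 * al * (2 ^+ m * (a - -1)) <=
    fine (\int[lebRn R m]_(x in box R m) (`|f x|)%:E).
  rewrite -lee_fin fineK//; last exact: integrable_fin_num.
  apply: H => x bx; rewrite indicE; case: (boolP (x \in _)) => [|_].
    rewrite inE => -[_] /=; rewrite in_itv /= => /andP[h1 h2].
    have -> : f x = - al by rewrite /f /g max_l ?add0r//; lra.
    rewrite mulr1 normrN gtr0_norm//; lra.
  rewrite mulr0 subr_ge0; exact: ler_norm.
exists ((fine (integralRow P (fun x => `|phi x|)))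
               / (- (fine (lebRow P) * inf (phi @` P))))%:E.
  exists phi => //; split.
  - exact: convex_psi.
  - rewrite /integrableRow preP; have := fi; apply: eq_integrable => // x _ /=.
    by rewrite phiE.
  - by rewrite /integralRow preP; under eq_integral do rewrite phiE.
  - exists 0; first exact: ballxx.
    by rewrite ph0 oppr_eq0 gt_eqF.
rewrite lee_fin lebRowP phiinf /integralRow preP.
under eq_integral do rewrite phiE.
rewrite /= mulrN opprK ler_pdivlMr; last by apply: mulr_gt0 => //; exact: exprn_gt0.
apply: le_trans H; rewrite exprS.
have p0 : 0 < 2 ^+ m :> R by exact: exprn_gt0.
have : 2 - e <= a - -1 by rewrite /a; lra.
set p := 2 ^+ m; move=> hh.
have -> : (2 - e) * (2 * p * al) = (2 * al * p) * (2 - e) by ring.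
have -> : 2 * al * (p * (a - -1)) = (2 * al * p) * (a - -1) by ring.
rewrite ler_wpM2l//; apply: mulr_ge0; [apply: mulr_ge0 => //; exact: ltW|exact: ltW].
Qed.
End Main.

(* R^n with n = m.+1 > 0 is 'rV[R]_m.+1 *)
Theorem proposition4p3 (R : realType) (m : nat) :
  exists P : set 'rV[R]_m.+1,
    [/\ open P, bounded_set P, @convex_set R 'rV[R]_m.+1 P &
      ereal_sup
        [set ((fine (integralRow P (fun x => `|phi x|)))
               / (- (fine (lebRow P) * inf (phi @` P))))%:E
        | phi in [set phi : 'rV[R]_m.+1 -> R |
            [/\ @convex_function R 'rV[R]_m.+1 P phi,
                integrableRow P phi,
                integralRow P phi = 0%E &
                exists2 x, P x & phi x != 0]]] = 2%:E].
Proof.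
exists (ball (0 : 'rV[R]_m.+1) 1); split.
- exact: ball_open.
- exact: P_bounded.
- exact: P_convex.
- apply/le_anti/andP; split.
    apply: ge_ereal_sup; exact: (@theset_ub R m).
  apply/lee_subgt0Pr => e e0; have [y Sy ey] := @theset_approx R m e e0.
  by apply: le_ereal_sup_tmp; exists y.
Qed.
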